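(* In the adaptive viral marketing setting under the Independent Cascade model, the utility function $f(S,\phi)=|\{v\in E:\exists u\in S,\ \exists w\in E,\ \phi_u((w,v))=1\}|+|S|$ is worst-case monotone and worst-case submodular with respect to the induced prior $p(\phi)$, and it satisfies minimal dependency.
   Context: Adaptive viral marketing setting: $G=(E,Z)$ is a finite directed graph with node set $E$ (the items) and edge set $Z$, and each edge $(u,v)\in Z$ has a propagation probability $p(u,v)\in[0,1]$. Let $X:Z\to\{0,1\}$ be random with independent coordinates, $\Pr[X(u,v)=1]=p(u,v)$ (edge live if $1$, blocked if $0$). The state of a node $u$ is the function $\phi_u:Z\to\{0,1,?\}$ with $\phi_u((w,v))=X(w,v)$ if $w$ is reachable from $u$ by a directed path of live edges (including $w=u$), and $\phi_u((w,v))=?$ otherwise. The realization is $\phi$ with $\phi(u)=\phi_u$; its prior $p$ is the law induced by $X$, $\Phi\sim p$, $U^+=\{\phi:p(\phi)>0\}$. A partial realization is $\psi:S\to O$ with $\mathrm{dom}(\psi)=S\subseteq E$ ($O$ the set of possible states), identified with its set of pairs; $\psi\subseteq\psi'$ means $\psi'$ extends $\psi$; $\phi\sim\psi$ means agreement on $\mathrm{dom}(\psi)$; only $\psi$ with $\Pr[\Phi\sim\psi]>0$ are considered and $p(\phi\mid\psi)=\Pr[\Phi=\phi\mid\Phi\sim\psi]$. $f(S,\psi)=\mathbb{E}[f(S,\Phi)\mid\Phi\sim\psi]$. For $e\notin\mathrm{dom}(\psi)$, $O(e,\psi)=\{o:\exists\phi,\ p(\phi\mid\psi)>0,\ \phi(e)=o\}$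 and $f_{wc}(e\mid\psi)=\min_{o\in O(e,\psi)}\{f(\mathrm{dom}(\psi)\cup\{e\},\psi\cup\{(e,o)\})-f(\mathrm{dom}(\psi),\psi)\}$. $f$ is worst-case submodular if $f_{wc}(e\mid\psi)\ge f_{wc}(e\mid\psi')$ for all $\psi\subseteq\psi'$ and $e\notin\mathrm{dom}(\psi')$; worst-case monotone if $f_{wc}(e\mid\psi)\ge0$ for all $\psi$ and $e\notin\mathrm{dom}(\psi)$; $f$ satisfies minimal dependency if $f(\mathrm{dom}(\psi),\psi)=f(\mathrm{dom}(\psi),\phi)$ for all $\psi$ and all $\phi\in U^+$ with $\phi\sim\psi$. *)

(* Defs.v *)
From HB Require Import structures.
From mathcomp Require Import all_boot all_order all_algebra.
Set Implicit Arguments. Unset Strict Implicit. Unset Printing Implicit Defensive.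
Import Order.TTheory GRing.Theory Num.Theory.
Local Open Scope ring_scope.

Section ViralMarketing.
Variables (R : realFieldType) (E : finType) (Z : rel E).

Definition edge := {uv : E * E | Z uv.1 uv.2}.
HB.instance Definition _ := Finite.on edge.

(* X : Z -> {0,1}  (true = live) *)
Definition liveness := {ffun edge -> bool}.
(* node state phi_u : Z -> {0,1,?}; None = '?' *)
Definition state := {ffun edge -> option bool}.
Definition realization := {ffun E -> state}.
(* partial realization psi : dom(psi) -> O, None = not in domain *)
Definition prealization := {ffun E -> option state}.

Variable p : edge -> R.

Definition probX (X : liveness) : R :=
  \prod_(z : edge) (if X z then p z else 1 - p z).

Definition live_rel (X : liveness) : rel E :=
  fun a b => [exists z : edge, (val z == (a, b)) && X z].

Definition reachable (X : liveness) (u w : E) : bool := connect (live_rel X) u w.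

Definition realize (X : liveness) : realization :=
  [ffun u => [ffun z : edge => if reachable X u (val z).1 then Some (X z) else None]].

Definition prior (phi : realization) : R :=
  \sum_(X : liveness | realize X == phi) probX X.

Definition dom (psi : prealization) : {set E} := [set u | psi u != None].

Definition consistent (phi : realization) (psi : prealization) : bool :=
  [forall u, if psi u is Some o then phi u == o else true].

Definition psub (psi psi' : prealization) : Prop :=
  forall u o, psi u = Some o -> psi' u = Some o.

Definition pext (psi : prealization) (e : E) (o : state) : prealization :=
  [ffun u => if u == e then Some o else psi u].

Definition prob_cons (psi : prealization) : R :=
  \sum_(phi : realization | consistent phi psi) prior phi.

Definition cond (phi : realization) (psi : prealization) : R :=
  if consistent phi psi then prior phi / prob_cons psi else 0.

Variable f : {set E} -> realization -> R.

Definition fpart (S : {set E}) (psi : prealization) : R :=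
  \sum_(phi : realization) cond phi psi * f S phi.

Definition Oset (e : E) (psi : prealization) : pred state :=
  [pred o | [exists phi : realization, (0 < cond phi psi) && (phi e == o)]].

Definition gain (e : E) (psi : prealization) (o : state) : R :=
  fpart (e |: dom psi) (pext psi e o) - fpart (dom psi) psi.

(* f_wc(e | psi) = min over o in O(e,psi) of the gain (O(e,psi) is nonempty
   whenever Pr[Phi ~ psi] > 0; the default 0 is never used then) *)
Definition fwc (e : E) (psi : prealization) : R :=
  let vals := [seq gain e psi o | o <- enum (Oset e psi)] in
  \big[Num.min/head 0 vals]_(x <- vals) x.

Definition wc_monotone : Prop :=
  forall (psi : prealization) (e : E),
    0 < prob_cons psi -> e \notin dom psi -> 0 <= fwc e psi.

Definition wc_submodular : Prop :=
  forall (psi psi' : prealization) (e : E),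
    0 < prob_cons psi -> 0 < prob_cons psi' -> psub psi psi' ->
    e \notin dom psi' -> fwc e psi' <= fwc e psi.

Definition minimal_dependency : Prop :=
  forall (psi : prealization) (phi : realization),
    0 < prob_cons psi -> 0 < prior phi -> consistent phi psi ->
    fpart (dom psi) psi = f (dom psi) phi.

End ViralMarketing.

Definition ic_utility (R : realFieldType) (E : finType) (Z : rel E)
    (S : {set E}) (phi : realization Z) : R :=
  (#|[set v : E | [exists u in S, exists z : edge Z,
        ((val z).2 == v) && (phi u z == Some true)]]|)%:R + (#|S|)%:R.

(* Main.v *)
Require Import Defs.
From HB Require Import structures.
From mathcomp Require Import all_boot all_order all_algebra.
From mathcomp Require Import ring.
Import Order.TTheory GRing.Theory Num.Theory.
Local Open Scope ring_scope.

Section Proof.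
Set Implicit Arguments. Unset Strict Implicit.
Variables (R : realFieldType) (E : finType) (Z : rel E).
Variable (p : edge Z -> R).
Hypothesis hp : forall z, 0 <= p z <= 1.

Implicit Types (phi : realization Z) (psi : prealization Z) (X : liveness Z) (S T : {set E}).
Local Notation f := (@ic_utility R E Z).

Lemma factor_ge0 (b : bool) z : 0 <= (if b then p z else 1 - p z).
Proof. by case: b; have /andP[h1 h2] := hp z; rewrite // subr_ge0. Qed.

Lemma probX_ge0 X : 0 <= probX p X.
Proof. by apply: prodr_ge0 => z _; apply: factor_ge0. Qed.

Lemma prior_ge0 phi : 0 <= prior p phi.
Proof. by apply: sumr_ge0 => X _; apply: probX_ge0. Qed.

Lemma prob_cons_ge0 psi : 0 <= prob_cons p psi.
Proof. by apply: sumr_ge0 => phi _; apply: prior_ge0. Qed.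

Lemma sum_ge_term (I : finType) (P : pred I) (F : I -> R) i :
  (forall j, P j -> 0 <= F j) -> P i -> F i <= \sum_(j | P j) F j.
Proof.
move=> h Pi; rewrite (bigD1 i) //= lerDl; apply: sumr_ge0 => j /andP[Pj _].
exact: h.
Qed.

Lemma sum_gt0_ex (I : finType) (P : pred I) (F : I -> R) :
  0 < \sum_(j | P j) F j -> exists2 j, P j & F j != 0.
Proof.
move=> h; case: (boolP [exists j, P j && (F j != 0)]).
  by case/existsP=> j /andP[]; exists j.
move/existsPn=> hn; move: h; rewrite big1 ?ltxx // => j Pj.
by move: (hn j); rewrite Pj /= negbK => /eqP.
Qed.

Lemma prob_cons_ex psi : 0 < prob_cons p psi ->
  exists2 phi, consistent phi psi & 0 < prior p phi.
Proof.
case/sum_gt0_ex=> phi c h; exists phi => //.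
by rewrite lt_def h prior_ge0.
Qed.

Lemma prior_ex phi : 0 < prior p phi ->
  exists2 X, realize X = phi & 0 < probX p X.
Proof.
case/sum_gt0_ex=> X /eqP c h; exists X => //.
by rewrite lt_def h probX_ge0.
Qed.

Lemma prior_probX X : 0 < probX p X -> 0 < prior p (realize X).
Proof.
move=> h; apply: (lt_le_trans h); apply: (@sum_ge_term _ (fun Y => realize Y == realize X)) => //.
by move=> *; apply: probX_ge0.
Qed.

Lemma cond_pos phi psi : 0 < prob_cons p psi ->
  (0 < cond p phi psi) = consistent phi psi && (0 < prior p phi).
Proof.
move=> h; rewrite /cond; case: (consistent phi psi); last by rewrite ltxx.
by rewrite pmulr_lgt0 // invr_gt0.
Qed.

Lemma cons_val phi psi u o : consistent phi psi -> psi u = Some o -> phi u = o.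
Proof. by move=> /forallP /(_ u) + e; rewrite e => /eqP. Qed.

Lemma in_dom psi u : (u \in dom psi) = (psi u != None).
Proof. by rewrite inE. Qed.

Lemma cons_dom phi psi u : consistent phi psi -> u \in dom psi -> psi u = Some (phi u).
Proof.
move=> c; rewrite in_dom; case e: (psi u) => [o|] // _.
by rewrite (cons_val c e).
Qed.

Lemma prob_cons_ge psi phi : consistent phi psi -> prior p phi <= prob_cons p psi.
Proof. by move=> c; apply: (@sum_ge_term _ (fun x : realization Z => consistent x psi)) => // *; apply: prior_ge0. Qed.

Definition cov (S : {set E}) (phi : realization Z) : {set E} :=
  [set v : E | [exists u in S, exists z : edge Z,
        ((val z).2 == v) && (phi u z == Some true)]].

Lemma fE S phi : f S phi = (#|cov S phi|)%:R + (#|S|)%:R.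
Proof. by []. Qed.

Lemma cov_ext S phi1 phi2 : (forall u, u \in S -> phi1 u = phi2 u) -> cov S phi1 = cov S phi2.
Proof.
move=> h; apply/setP=> v; rewrite !inE; apply/existsP/existsP=> -[u /andP[uS H]];
  exists u; by rewrite uS /= ?(h u uS) // -(h u uS).
Qed.

Lemma cov_mono S T phi : S \subset T -> cov S phi \subset cov T phi.
Proof.
move=> sST; apply/subsetP=> v; rewrite !inE => /existsP[u /andP[uS H]].
by apply/existsP; exists u; rewrite (subsetP sST) .
Qed.

Lemma cov_U1 e S phi : cov (e |: S) phi = cov [set e] phi :|: cov S phi.
Proof.
apply/setP=> v; rewrite !inE; apply/idP/idP.
  case/existsP=> u /andP[]; rewrite ?inE => /orP[uS|uS] H; apply/orP; [left|right];
  by apply/existsP; exists u; rewrite ?inE ?eqxx ?uS.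
case/orP=> /existsP[u /andP[]]; rewrite ?inE => uS H; apply/existsP; exists u;
  by rewrite !inE uS ?orbT.
Qed.

Lemma f_dep S phi1 phi2 : (forall u, u \in S -> phi1 u = phi2 u) -> f S phi1 = f S phi2.
Proof. by move=> h; rewrite !fE (cov_ext h). Qed.

Lemma fpart_eq psi phi0 : 0 < prob_cons p psi -> consistent phi0 psi ->
  fpart p f (dom psi) psi = f (dom psi) phi0.
Proof.
move=> hpc c0; rewrite /fpart.
have -> : \sum_phi cond p phi psi * f (dom psi) phi =
          \sum_phi cond p phi psi * f (dom psi) phi0.
  apply: eq_bigr => phi _; rewrite /cond; case c: (consistent phi psi); last by rewrite !mul0r.
  congr (_ * _); apply: f_dep => u ud.
  by have := cons_dom c ud; rewrite (cons_dom c0 ud) => -[].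
rewrite -mulr_suml.
suff -> : \sum_phi cond p phi psi = 1 by rewrite mul1r.
rewrite /cond -big_mkcond /= -mulr_suml divff //.
by rewrite gt_eqF.
Qed.


Lemma cardUD (A B : {set E}) : #|A :|: B| = (#|A :\: B| + #|B|)%N.
Proof.
have := cardsID B (A :|: B); rewrite setIC setKU setDUl setDv setU0 => <-.
by rewrite addnC.
Qed.

Lemma pext_dom psi e o : dom (pext psi e o) = e |: dom psi.
Proof. by apply/setP=> u; rewrite !inE ffunE; case: (u == e). Qed.

Lemma pext_cons phi psi e : consistent phi psi -> consistent phi (pext psi e (phi e)).
Proof.
move=> /forallP c; apply/forallP=> u; rewrite ffunE.
by case: eqP => [->|_] //; apply: c.
Qed.

Lemma gainE psi e phi : 0 < prob_cons p psi -> 0 < cond p phi psi -> e \notin dom psi ->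
  gain p f e psi (phi e) = (#|cov [set e] phi :\: cov (dom psi) phi|)%:R + 1.
Proof.
move=> hpc; rewrite cond_pos // => /andP[c pr] eS.
have c' := pext_cons e c.
have hpc' : 0 < prob_cons p (pext psi e (phi e)) by apply: (lt_le_trans pr); apply: prob_cons_ge.
rewrite /gain -(pext_dom psi e (phi e)) (fpart_eq hpc' c') (fpart_eq hpc c) pext_dom.
rewrite !fE cov_U1 cardUD cardsU1 eS !natrD.
have -> : (true : nat) = 1%N by [].
ring.
Qed.

Lemma factor_pos X z : 0 < probX p X -> 0 < (if X z then p z else 1 - p z).
Proof.
move=> h; rewrite lt_def factor_ge0 andbT; apply/eqP=> h0; move: h.
by rewrite /probX (bigD1 z) //= h0 mul0r ltxx.
Qed.

Lemma path_last_in (e : rel E) (A : pred E) a s :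
  (forall x y, A x -> e x y -> A y) -> A a -> path e a s -> A (last a s).
Proof.
move=> cl; elim: s a => [|b s IH] a //= aA /andP[h1 h2].
by apply: IH => //; apply: cl h1.
Qed.

Lemma path_agree (e1 e2 : rel E) (A : pred E) a s :
  (forall x y, A x -> e1 x y = e2 x y) -> (forall x y, A x -> e2 x y -> A y) ->
  A a -> path e1 a s -> path e2 a s.
Proof.
move=> ag cl; elim: s a => [|b s IH] a //= aA /andP[h1 h2].
have h1' : e2 a b by rewrite -ag.
by rewrite h1' /=; apply: IH => //; apply: cl h1'.
Qed.

Lemma connect_agree (e1 e2 : rel E) (A : pred E) a w :
  (forall x y, A x -> e1 x y = e2 x y) -> (forall x y, A x -> e2 x y -> A y) ->
  A a -> connect e1 a w = connect e2 a w.
Proof.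
move=> ag cl aA; apply/connectP/connectP=> -[s ps ->]; exists s => //.
  exact: (path_agree ag cl).
apply: (@path_agree e2 e1 A) => //.
  by move=> x y Ax; rewrite ag.
by move=> x y Ax h; apply: (cl x) => //; rewrite -ag.
Qed.

Lemma path_out (e1 e2 : rel E) (A : pred E) a s :
  (forall x y, ~~ A x -> e1 x y = e2 x y) -> (forall x y, A x -> e1 x y -> A y) ->
  path e1 a s -> ~~ A (last a s) -> path e2 a s.
Proof.
move=> ag cl; elim: s a => [|b s IH] a //= /andP[h1 h2] hl.
have aA : ~~ A a.
  apply/negP=> aA; move/negP: hl; apply; apply: (path_last_in cl) h2.
  exact: cl h1.
by rewrite -ag // h1 /=; apply: IH.
Qed.

Lemma realizeE X u z : realize X u z = if reachable X u (val z).1 then Some (X z) else None.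
Proof. by rewrite !ffunE. Qed.

Lemma core psi psi' e o : 0 < prob_cons p psi -> 0 < prob_cons p psi' -> psub psi psi' ->
  e \notin dom psi' -> o \in Oset p e psi ->
  exists2 o', o' \in Oset p e psi' & gain p f e psi' o' <= gain p f e psi o.
Proof.
move=> hpc hpc' sub eS' /existsP[phi /andP[cp /eqP <-]].
have eS : e \notin dom psi.
  apply: contra eS'; rewrite !in_dom; case h: (psi e) => [o0|] // _.
  by rewrite (sub _ _ h).
have cp0 := cp; move: cp0; rewrite cond_pos // => /andP[c pr].
have [X hX pX] := prior_ex pr.
have [phi' c' pr'] := prob_cons_ex hpc'.
have [X' hX' pX'] := prior_ex pr'.
pose A' : pred E := fun w => [exists u in dom psi', reachable X' u w].
pose Y : liveness Z := [ffun z => if A' (val z).1 then X' z else X z].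
have clX' : forall x y, A' x -> live_rel X' x y -> A' y.
  move=> x y /existsP[u /andP[uS r]] l; apply/existsP; exists u; rewrite uS /=.
  by apply: connect_trans r (connect1 l).
have agIn : forall x y, A' x -> live_rel Y x y = live_rel X' x y.
  move=> x y Ax; apply: eq_existsb => z; case: eqP => [hz|] //=.
  by rewrite ffunE hz /= Ax.
have agOut : forall x y, ~~ A' x -> live_rel Y x y = live_rel X x y.
  move=> x y Ax; apply: eq_existsb => z; case: eqP => [hz|] //=.
  by rewrite ffunE hz /= (negbTE Ax).
have clY : forall x y, A' x -> live_rel Y x y -> A' y.
  by move=> x y Ax; rewrite agIn //; apply: clX'.
have hY : forall u, u \in dom psi' -> realize Y u = realize X' u.
  move=> u uS; have uA : A' u by apply/existsP; exists u; rewrite uS /reachable connect0.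
  apply/ffunP=> z; rewrite !realizeE /reachable (connect_agree _ agIn clX' uA).
  case r: (connect _ u _) => //; rewrite ffunE.
  suff -> : A' (val z).1 by [].
  by apply/existsP; exists u; rewrite uS.
have cY : consistent (realize Y) psi'.
  apply/forallP=> u; case h: (psi' u) => [o'|] //.
  have uS : u \in dom psi' by rewrite in_dom h.
  by rewrite hY // hX'; have := cons_val c' h => ->.
have pY : 0 < probX p Y.
  apply: prodr_gt0 => z _; rewrite ffunE; case: (A' (val z).1); [exact: factor_pos pX' | exact: factor_pos pX].
have cpY : 0 < cond p (realize Y) psi' by rewrite cond_pos // cY /= prior_probX.
exists (realize Y e).
  by apply/existsP; exists (realize Y); rewrite cpY eqxx.
rewrite (gainE hpc' cpY eS') (gainE hpc cp eS) lerD2r ler_nat.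
apply: subset_leq_card; apply/subsetP=> v.
have covS : cov (dom psi) phi \subset cov (dom psi') (realize Y).
  have -> : cov (dom psi) phi = cov (dom psi) (realize Y).
    apply: cov_ext => u uS.
    have h1 := cons_dom c uS.
    have h2 := sub _ _ h1.
    have uS' : u \in dom psi' by rewrite in_dom h2.
    by have := cons_dom cY uS'; rewrite h2 => -[].
  apply: cov_mono; apply/subsetP=> u; rewrite !in_dom.
  by case h: (psi u) => [o0|] // _; rewrite (sub _ _ h).
rewrite !inE => /andP[nS /existsP[u /andP[]]]; rewrite inE => /eqP -> {u}.
case/existsP=> z /andP[zv].
rewrite realizeE; case r: (reachable Y e (val z).1) => //= /eqP [Yz].
have nA : ~~ A' (val z).1.
  apply/negP=> /existsP[u /andP[uS ru]]; move/negP: nS; apply.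
  apply/existsP; exists u; rewrite uS /=; apply/existsP; exists z.
  rewrite zv /= hY // realizeE ru.
  have hYX : Y z = X' z.
    by rewrite ffunE /= ifT //; apply/existsP; exists u; rewrite uS.
  by rewrite -hYX Yz.
apply/andP; split.
  apply/negP=> hv; move/negP: nS; apply; have := subsetP covS v; rewrite /cov !inE; apply.
  exact: hv.
apply/existsP; exists e; rewrite inE eqxx /=; apply/existsP; exists z.
rewrite zv /= -hX realizeE.
have rX : reachable X e (val z).1.
  move: r; rewrite /reachable => /connectP[s ps hl]; apply/connectP; exists s => //.
  by apply: (path_out agOut clY ps); rewrite -hl.
by rewrite rX; move: Yz; rewrite ffunE /= (negbTE nA) => ->.
Qed.

Lemma bigmin_le (s : seq R) (i x : R) : x \in s -> \big[Num.min/i]_(y <- s) y <= x.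
Proof.
elim: s => //= a s IH; rewrite inE big_cons => /orP[/eqP->|xs].
  by rewrite ge_min lexx.
by rewrite ge_min IH // orbT.
Qed.

Lemma bigmin_mem (s : seq R) (i : R) : \big[Num.min/i]_(y <- s) y \in i :: s.
Proof.
elim: s => [|a s IH]; first by rewrite big_nil inE.
rewrite big_cons minEle; case: ifP => _; first by rewrite !inE eqxx orbT.
move: IH; rewrite !inE => /orP[->|->] //; by rewrite !orbT.
Qed.

Lemma bigmin_head_ge0 (s : seq R) : (forall x, x \in s -> 0 <= x) ->
  0 <= \big[Num.min/head 0 s]_(y <- s) y.
Proof.
move=> h; have := bigmin_mem s (head 0 s); rewrite inE => /orP[/eqP->|]; last exact: h.
by case: s h => //= a l h; apply: h; rewrite mem_head.
Qed.

Lemma bigmin_head_mem (s : seq R) : s != [::] -> \big[Num.min/head 0 s]_(y <- s) y \in s.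
Proof.
move=> ne; have := bigmin_mem s (head 0 s); rewrite inE => /orP[/eqP->|] //.
by case: s ne => //= a l _; rewrite mem_head.
Qed.

Lemma wc_mono : wc_monotone p f.
Proof.
move=> psi e hpc eS; rewrite /fwc; apply: bigmin_head_ge0 => x /mapP[o].
rewrite mem_enum => /existsP[phi /andP[cp /eqP <-]] ->.
by rewrite gainE // addr_ge0 ?ler0n.
Qed.

Lemma wc_sub : wc_submodular p f.
Proof.
move=> psi psi' e hpc hpc' sub eS'.
have [phi c pr] := prob_cons_ex hpc.
have cp : 0 < cond p phi psi by rewrite cond_pos // c.
have ne : [seq gain p f e psi o | o <- enum (Oset p e psi)] != [::].
  apply/eqP=> h; have : gain p f e psi (phi e) \in [::].
    by rewrite -h map_f // mem_enum; apply/existsP; exists phi; rewrite cp eqxx.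
  by [].
have := bigmin_head_mem ne; case/mapP=> o; rewrite mem_enum => ho heq.
have -> : fwc p f e psi = gain p f e psi o by exact: heq.
have [o' ho' hle] := core hpc hpc' sub eS' ho.
apply: le_trans hle; rewrite /fwc; apply: bigmin_le.
by rewrite map_f // mem_enum.
Qed.

Lemma min_dep : minimal_dependency p f.
Proof.
by move=> psi phi hpc pr c; apply: fpart_eq.
Qed.

End Proof.

Theorem proposition3 (R : realFieldType) (E : finType) (Z : rel E)
    (p : edge Z -> R) (hp : forall z, 0 <= p z <= 1) :
  wc_monotone p (@ic_utility R E Z) /\
  wc_submodular p (@ic_utility R E Z) /\
  minimal_dependency p (@ic_utility R E Z).
Proof.
split; [exact: wc_mono hp | split; [exact: wc_sub hp | exact: min_dep]].
Qed.
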